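(* Let $V$ and $W$ be pfd $B$-persistence modules, decomposed as $V\cong\bigoplus_{\mathcal{X}}V^{\mathcal{X}}$ and $W\cong\bigoplus_{\mathcal{X}}W^{\mathcal{X}}$, with $\mathcal{X}$ ranging over $\{\mathcal{U},\mathcal{D},\mathcal{B},\mathcal{L},\mathcal{R}\}$. For every $\epsilon\ge0$ the following are equivalent: - (i) $V$ and $W$ are $\Lambda_\epsilon$-interleaved; - (ii) $V^{\mathcal{X}}$ and $W^{\mathcal{X}}$ are $\Lambda_\epsilon$-interleaved for each $\mathcal{X}\in\{\mathcal{U},\mathcal{D},\mathcal{B},\mathcal{L},\mathcal{R}\}$.
   Context: Let $k$ be a field. The bipath poset $B$ has underlying set $(\mathbb{R}\times\{1,2\})\sqcup\{-\infty,+\infty\}$. Its order is: $x\le y$ iff $x=-\infty$, or $y=+\infty$, or $x=(s,i)$, $y=(t,i)$ with the same $i$ and $s\le t$. A $B$-persistence module is a functor from $B$ (as a category) to $k$-vector spaces; it is pfd if all spaces are finite-dimensional. An interval of $B$ is a nonempty convex and connected subset (convex: $p,q\in I$, $p\le r\le q$ imply $r\in I$; connected: any two elements are joined by a finite sequence in $I$ with consecutive ones comparable). $k_I$ denotes the interval module. Every pfd $B$-module decomposes uniquely (up to isomorphism and permutation) into interval modules. The types of intervals are: - $\mathcal{U}$: intervals contained in $\mathbb{R}\times\{1\}$; - $\mathcal{D}$: intervals contained in $\mathbb{R}\times\{2\}$; - $\mathcal{B}=\{B\}$; - $\mathcal{L}$: intervals $\neq B$ containing $-\infty$; - $\mathcal{R}$: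 intervals $\neq B$ containing $+\infty$. $V^{\mathcal{X}}$ denotes the direct sum of those interval summands of $V$ whose interval lies in $\mathcal{X}$; it is well defined up to isomorphism. For $\epsilon\ge0$, $\Lambda_\epsilon\colon B\to B$ sends $(r,i)\mapsto(r+\epsilon,i)$ and fixes $\pm\infty$. Then: - $V(\epsilon)_b=V_{\Lambda_\epsilon b}$ and $V(\epsilon)(b,b')=V(\Lambda_\epsilon b,\Lambda_\epsilon b')$; for a morphism $\phi$, $\phi(\epsilon)$ has components $\phi_{\Lambda_\epsilon b}$; - $V_{0\to\epsilon}\colon V\to V(\epsilon)$ has components $V(b,\Lambda_\epsilon b)$; - $V$ and $W$ are $\Lambda_\epsilon$-interleaved if there are $\alpha\colon V\to W(\epsilon)$ and $\beta\colon W\to V(\epsilon)$ with $\beta(\epsilon)\alpha=V_{0\to2\epsilon}$ and $\alpha(\epsilon)\beta=W_{0\to2\epsilon}$. *)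

(* Defs.v *)
From Stdlib Require Import Reals.
From mathcomp Require Import all_boot all_algebra.

Set Implicit Arguments.
Unset Strict Implicit.
Unset Printing Implicit Defensive.

Import GRing.Theory.
Local Open Scope ring_scope.

Inductive strand := S1 | S2.

Inductive Bpt :=
  | Ninf : Bpt
  | Pinf : Bpt
  | Pt : R -> strand -> Bpt.

Definition Ble (x y : Bpt) : Prop :=
  match x, y with
  | Ninf, _ => True
  | _, Pinf => True
  | Pt s i, Pt t j => i = j /\ Rle s t
  | _, _ => False
  end.

Definition Bcomparable (x y : Bpt) : Prop := Ble x y \/ Ble y x.

Definition is_interval (I : Bpt -> Prop) : Prop :=
  (exists p, I p) /\
  (forall p q r, I p -> I q -> Ble p r -> Ble r q -> I r) /\
  (forall p q, I p -> I q ->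
     exists (n : nat) (f : nat -> Bpt),
       f 0%N = p /\ f n = q /\
       (forall m, (m <= n)%N -> I (f m)) /\
       (forall m, (m < n)%N -> Bcomparable (f m) (f m.+1))).

Inductive itype := TU | TD | TB | TL | TR.

(* I is of type X (I is assumed to be an interval) *)
Definition of_type (X : itype) (I : Bpt -> Prop) : Prop :=
  match X with
  | TU => forall x, I x -> exists r, x = Pt r S1
  | TD => forall x, I x -> exists r, x = Pt r S2
  | TB => forall x, I x
  | TL => I Ninf /\ ~ (forall x, I x)
  | TR => I Pinf /\ ~ (forall x, I x)
  end.

(* ---------- pfd B-persistence modules ----------
   A pfd module is given by finite dimensions and structure maps (matrices,
   row-vector convention: v |-> v *m pmap b b'), functorial on b <= b'.
   Values of pmap on incomparable pairs are irrelevant. *)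
Record pmod (k : fieldType) := Pmod {
  pdim : Bpt -> nat;
  pmap : forall b b', 'M[k]_(pdim b, pdim b');
  pmap_id : forall b, pmap b b = 1%:M;
  pmap_comp : forall b b' b'', Ble b b' -> Ble b' b'' ->
      pmap b b' *m pmap b' b'' = pmap b b''
}.

Definition is_hom (k : fieldType) (V W : pmod k)
    (f : forall b, 'M[k]_(pdim V b, pdim W b)) : Prop :=
  forall b b', Ble b b' -> pmap V b b' *m f b' = f b *m pmap W b b'.

Definition Lam (e : R) (b : Bpt) : Bpt :=
  match b with
  | Pt r i => Pt (Rplus r e) i
  | x => x
  end.

Lemma Lam_mono e b b' : Ble b b' -> Ble (Lam e b) (Lam e b').
Proof.
case: b => [||r i]; case: b' => [||s j] //=.
move=> [-> H]; split => //; exact: Rplus_le_compat_r.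
Qed.

Definition shift (k : fieldType) (V : pmod k) (e : R) : pmod k :=
  @Pmod k (fun b => pdim V (Lam e b))
    (fun b b' => pmap V (Lam e b) (Lam e b'))
    (fun b => pmap_id V (Lam e b))
    (fun b b' b'' H1 H2 => pmap_comp V (Lam_mono e H1) (Lam_mono e H2)).

(* Lambda_eps-interleaving: alpha : V -> W(eps), beta : W -> V(eps),
   beta(eps) alpha = V_{0 -> 2eps}, alpha(eps) beta = W_{0 -> 2eps}.
   (Lam e (Lam e b) is Lambda_{2 eps} b.) *)
Definition interleaved (k : fieldType) (V W : pmod k) (e : R) : Prop :=
  exists (alpha : forall b, 'M[k]_(pdim V b, pdim W (Lam e b)))
         (beta : forall b, 'M[k]_(pdim W b, pdim V (Lam e b))),
    is_hom (W := shift W e) alpha /\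
    is_hom (W := shift V e) beta /\
    (forall b, alpha b *m beta (Lam e b) = pmap V b (Lam e (Lam e b))) /\
    (forall b, beta b *m alpha (Lam e b) = pmap W b (Lam e (Lam e b))).

(* ---------- Interval decompositions ----------
   has_barcode V J I : V is isomorphic to the direct sum of the interval
   modules k_{I j}, j : J.  Unfolded: there are bases of each V_b (rows of the
   invertible matrix Q b), indexed through idx b by exactly the j with
   b \in I j, such that for b <= b' the structure map sends the basis vector
   of index j at b to the basis vector of index j at b' if b' \in I j, and to
   0 otherwise (i.e. it is the structure map of k_{I j}). *)
Definition has_barcode (k : fieldType) (V : pmod k) (J : Type)
    (I : J -> Bpt -> Prop) : Prop :=
  (forall j, is_interval (I j)) /\
  exists (idx : forall b, 'I_(pdim V b) -> J)
         (Q : forall b, 'M[k]_(pdim V b)),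
    (forall b, Q b \in unitmx) /\
    (forall b, injective (idx b)) /\
    (forall b j, I j b <-> exists i, idx b i = j) /\
    (forall b b' i i', Ble b b' ->
       (idx b i = idx b' i' -> (Q b *m pmap V b b' *m invmx (Q b')) i i' = 1) /\
       (idx b i <> idx b' i' -> (Q b *m pmap V b b' *m invmx (Q b')) i i' = 0)).

(* VX X is V^X for every type X: for some interval decomposition (I j)_{j:J}
   of V, VX X is isomorphic to the direct sum of those k_{I j} with I j of
   type X.  (Well defined up to isomorphism by uniqueness of decompositions.) *)
Definition type_parts (k : fieldType) (V : pmod k) (VX : itype -> pmod k) : Prop :=
  exists (J : Type) (I : J -> Bpt -> Prop),
    has_barcode V I /\
    forall X, has_barcode (VX X) (fun j : {j : J | of_type X (I j)} => I (proj1_sig j)).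

(* Main.v *)
From HB Require Import structures.
Require Import Defs.
From Stdlib Require Import Reals ClassicalEpsilon Classical ProofIrrelevance.
From mathcomp Require Import all_boot all_algebra.

Set Implicit Arguments.
Unset Strict Implicit.
Unset Printing Implicit Defensive.
Import GRing.Theory.
Local Open Scope ring_scope.
Local Notation pmap := Defs.pmap.

Definition it2n X := match X with TU=>0|TD=>1|TB=>2|TL=>3|TR=>4 end%N.
Definition n2it n := match n with 0=>TU|1=>TD|2=>TB|3=>TL|_=>TR end%N.
Lemma it2nK : cancel it2n n2it. Proof. by case. Qed.
HB.instance Definition _ := Countable.copy itype (can_type it2nK).
Lemma itype_enumP : Finite.axiom [:: TU; TD; TB; TL; TR].
Proof. by case. Qed.
HB.instance Definition _ := isFinite.Build itype itype_enumP.

Lemma Ble_Ninf x : Ble Ninf x. Proof. by []. Qed.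
Lemma Ble_Pinf x : Ble x Pinf. Proof. by case: x. Qed.

Lemma whole I : is_interval I -> I Ninf -> I Pinf -> forall x, I x.
Proof.
case=> _ [C _] h1 h2 x; exact: (C Ninf Pinf x h1 h2 (Ble_Ninf x) (Ble_Pinf x)).
Qed.

Definition hasN X := match X with TB | TL => true | _ => false end.
Definition hasP X := match X with TB | TR => true | _ => false end.

Lemma type_inf I X : is_interval I -> of_type X I ->
  (I Ninf <-> hasN X) /\ (I Pinf <-> hasP X).
Proof.
move=> HI; case: X => /=.
- by move=> H; split; split=> // /H [].
- by move=> H; split; split=> // /H [].
- by move=> H; split; split=> //.
- move=> [h1 h2]; split; split=> // hP; exfalso; apply: h2; exact: whole.
- move=> [h1 h2]; split; split=> // hP; exfalso; apply: h2; exact: whole.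
Qed.

Lemma type_unique I X Y : is_interval I -> of_type X I -> of_type Y I -> X = Y.
Proof.
move=> HI TX TY; have [[p Ip] _] := HI.
have [[a1 a2] [a3 a4]] := type_inf HI TX.
have [[b1 b2] [b3 b4]] := type_inf HI TY.
case: X TX a1 a2 a3 a4; case: Y TY b1 b2 b3 b4 => //= TY b1 b2 b3 b4 TX a1 a2 a3 a4.
all: try (have := b1 (a2 isT); done).
all: try (have := b3 (a4 isT); done).
all: try (have := a1 (b2 isT); done).
all: try (have := a3 (b4 isT); done).
all: have [r1 e1] := TX _ Ip; have [r2 e2] := TY _ Ip; by rewrite e1 in e2.
Qed.

Lemma type_exists I : is_interval I -> exists X, of_type X I.
Proof.
move=> HI.
case: (classic (I Ninf)) => hN.
  case: (classic (forall x, I x)) => hw; first by exists TB.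
  by exists TL.
case: (classic (I Pinf)) => hP.
  case: (classic (forall x, I x)) => hw; first by exists TB.
  by exists TR.
have [[p Ip] [_ Cn]] := HI.
have Pt_of : forall x, I x -> exists r s, x = Pt r s.
  move=> [||r s] h; [by [] | by [] | by exists r, s].
have [r [s ep]] := Pt_of _ Ip.
have Hs : forall x, I x -> exists r, x = Pt r s.
  move=> q Iq; have [n [f [f0 [fn [fI fC]]]]] := Cn p q Ip Iq.
  suff: forall m, (m <= n)%N -> exists r, f m = Pt r s.
    by move=> /(_ n (leqnn n)) [t ht]; exists t; rewrite -fn.
  elim=> [|m IH] hm; first by exists r; rewrite f0.
  have [t ht] := IH (ltnW hm).
  have [t' [s' ht']] := Pt_of _ (fI _ hm).
  exists t'; rewrite ht'; congr Pt.
  by case: (fC m hm); rewrite ht ht' /= => -[].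
by case: s Hs ep => Hs _; [exists TU | exists TD].
Qed.

Lemma cross_logic X Y I1 J I2 b e :
  is_interval I1 -> is_interval J -> is_interval I2 ->
  of_type X I1 -> of_type Y J -> of_type X I2 -> I1 b -> J (Lam e b) ->
  (J Ninf -> I2 Ninf) -> (J Pinf -> I1 Pinf) -> (I1 Ninf -> J Ninf) ->
  (I2 Pinf -> J Pinf) -> X = Y.
Proof.
move=> H1 HJ H2 T1 TJ T2 b1 bJ c1 c2 c3 c4.
have [[a1 a2] [a3 a4]] := type_inf H1 T1.
have [[d1 d2] [d3 d4]] := type_inf HJ TJ.
have [[f1 f2] [f3 f4]] := type_inf H2 T2.
case: X T1 T2 a1 a2 a3 a4 f1 f2 f3 f4; case: Y TJ d1 d2 d3 d4 => //= TJ d1 d2 d3 d4 T1 T2 a1 a2 a3 a4 f1 f2 f3 f4.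
all: try (have := f1 (c1 (d2 isT)); done).
all: try (have := a3 (c2 (d4 isT)); done).
all: try (have := d1 (c3 (a2 isT)); done).
all: try (have := d3 (c4 (f4 isT)); done).
all: have [r1 e1] := T1 _ b1; subst b; have [r2 e2] := TJ _ bJ; discriminate.
Qed.
Section Rel.
Variable k : fieldType.

Definition dl (P : Prop) : k := if excluded_middle_informative P then 1 else 0.

Definition relmx m n (R : 'I_m -> 'I_n -> Prop) : 'M[k]_(m, n) :=
  \matrix_(i, j) dl (R i j).

Lemma sum_unique (I : finType) (F : I -> k) i0 :
  (forall i, i != i0 -> F i = 0) -> \sum_i F i = F i0.
Proof.
move=> H; rewrite (bigD1 i0) //= big1 ?addr0 // => i /H //.
Qed.

Lemma sum_zero (I : finType) (F : I -> k) :
  (forall i, F i = 0) -> \sum_i F i = 0.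
Proof. by move=> H; rewrite big1. Qed.

Lemma dlT (P : Prop) : P -> dl P = 1.
Proof. by rewrite /dl; case: excluded_middle_informative. Qed.
Lemma dlF (P : Prop) : ~ P -> dl P = 0.
Proof. by rewrite /dl; case: excluded_middle_informative. Qed.

Lemma relmx_ext m n (R R' : 'I_m -> 'I_n -> Prop) :
  (forall i j, R i j <-> R' i j) -> relmx R = relmx R'.
Proof.
move=> H; apply/matrixP => i j; rewrite !mxE.
case: (classic (R i j)) => h.
  by rewrite !dlT //; apply/H.
by rewrite !dlF // => /H.
Qed.

Lemma relmx_mul m n p (R1 : 'I_m -> 'I_n -> Prop) (R2 : 'I_n -> 'I_p -> Prop) :
  (forall i l j j', R1 i j -> R2 j l -> R1 i j' -> R2 j' l -> j = j') ->
  relmx R1 *m relmx R2 = relmx (fun i l => exists j, R1 i j /\ R2 j l).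
Proof.
move=> U; apply/matrixP => i l; rewrite !mxE.
case: (classic (exists j, R1 i j /\ R2 j l)) => [[j [h1 h2]]|h].
  rewrite dlT; last by exists j.
  rewrite (sum_unique (i0 := j)); first by rewrite !mxE !dlT // mulr1.
  move=> j' nj; rewrite !mxE.
  case: (classic (R1 i j' /\ R2 j' l)) => [[h1' h2']|h'].
    by move: nj; rewrite (U _ _ _ _ h1' h2' h1 h2) eqxx.
  case: (classic (R1 i j')) => h1'; last by rewrite dlF // mul0r.
  by rewrite (dlF (P := R2 j' l)) ?mulr0 // => h2'; apply: h'.
rewrite dlF // sum_zero // => j; rewrite !mxE.
case: (classic (R1 i j)) => h1; last by rewrite dlF // mul0r.
by rewrite (dlF (P := R2 j l)) ?mulr0 // => h2; apply: h; exists j.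
Qed.

Lemma relmx_eq1 n : relmx (fun i j : 'I_n => i = j) = 1%:M.
Proof.
apply/matrixP => i j; rewrite !mxE; case: (eqVneq i j) => [->|ne].
  by rewrite dlT.
by rewrite dlF // => e; move: ne; rewrite e eqxx.
Qed.

Lemma relmx_F m n : relmx (fun (i : 'I_m) (j : 'I_n) => False) = 0.
Proof. by apply/matrixP => i j; rewrite !mxE dlF. Qed.

Lemma relmx_tr m n (R : 'I_m -> 'I_n -> Prop) :
  (relmx R)^T = relmx (fun j i => R i j).
Proof. by apply/matrixP => i j; rewrite !mxE. Qed.

Lemma relmx_sum (T : finType) m n (R : T -> 'I_m -> 'I_n -> Prop) :
  (forall i j x y, R x i j -> R y i j -> x = y) ->
  \sum_x relmx (R x) = relmx (fun i j => exists x, R x i j).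
Proof.
move=> U; apply/matrixP => i j; rewrite summxE mxE.
case: (classic (exists x, R x i j)) => [[x h]|h].
  rewrite dlT; last by exists x.
  rewrite (sum_unique (i0 := x)); first by rewrite mxE dlT.
  move=> y ny; rewrite mxE dlF // => h'.
  by move: ny; rewrite (U _ _ _ _ h' h) eqxx.
rewrite dlF // sum_zero // => x; rewrite mxE dlF // => h'; apply: h; by exists x.
Qed.

Lemma relmx_mulF m n p (R : 'I_m -> 'I_n -> Prop) (F : 'M[k]_(n, p)) i l j0 :
  R i j0 -> (forall j, R i j -> j = j0) -> (relmx R *m F) i l = F j0 l.
Proof.
move=> h U; rewrite mxE (sum_unique (i0 := j0)); first by rewrite mxE dlT // mul1r.
move=> j nj; rewrite mxE dlF ?mul0r // => h'.
by move: nj; rewrite (U _ h') eqxx.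
Qed.

Lemma relmx_mulF0 m n p (R : 'I_m -> 'I_n -> Prop) (F : 'M[k]_(n, p)) i l :
  (forall j, ~ R i j) -> (relmx R *m F) i l = 0.
Proof. by move=> h; rewrite mxE sum_zero // => j; rewrite mxE dlF ?mul0r. Qed.

Lemma Fmul_relmx m n p (R : 'I_n -> 'I_p -> Prop) (F : 'M[k]_(m, n)) i l j0 :
  R j0 l -> (forall j, R j l -> j = j0) -> (F *m relmx R) i l = F i j0.
Proof.
move=> h U; rewrite mxE (sum_unique (i0 := j0)); first by rewrite mxE dlT // mulr1.
move=> j nj; rewrite mxE dlF ?mulr0 // => h'.
by move: nj; rewrite (U _ h') eqxx.
Qed.

Lemma Fmul_relmx0 m n p (R : 'I_n -> 'I_p -> Prop) (F : 'M[k]_(m, n)) i l :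
  (forall j, ~ R j l) -> (F *m relmx R) i l = 0.
Proof. by move=> h; rewrite mxE sum_zero // => j; rewrite mxE dlF ?mulr0. Qed.

End Rel.

Definition bcP (k : fieldType) (V : pmod k) (J : Type) (I : J -> Bpt -> Prop)
  (idx : forall b, 'I_(pdim V b) -> J) (Q : forall b, 'M[k]_(pdim V b)) : Prop :=
    (forall b, Q b \in unitmx) /\
    (forall b, injective (idx b)) /\
    (forall b j, I j b <-> exists i, idx b i = j) /\
    (forall b b' i i', Ble b b' ->
       (idx b i = idx b' i' -> (Q b *m pmap V b b' *m invmx (Q b')) i i' = 1) /\
       (idx b i <> idx b' i' -> (Q b *m pmap V b b' *m invmx (Q b')) i i' = 0)).

Arguments bcP {k} V {J} I idx Q.

Section BC.
Variables (k : fieldType) (V : pmod k) (J : Type) (I : J -> Bpt -> Prop)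
  (idx : forall b, 'I_(pdim V b) -> J) (Q : forall b, 'M[k]_(pdim V b)).
Arguments idx : clear implicits.
Arguments Q : clear implicits.
Hypothesis hV : bcP V I idx Q.

Definition Mrel (b b' : Bpt) : 'M[k]_(pdim V b, pdim V b') := @relmx k _ _ (fun i i' => idx b i = idx b' i').

Lemma bc_M b b' : Ble b b' -> Q b *m pmap V b b' *m invmx (Q b') = Mrel b b'.
Proof.
move=> hb; apply/matrixP => i i'.
have [_ [_ [_ H]]] := hV; have [H1 H2] := H b b' i i' hb.
rewrite /Mrel /relmx [in RHS]mxE.
case: (classic (idx b i = idx b' i')) => h.
  by rewrite H1 // dlT.
by rewrite H2 // dlF.
Qed.

Lemma bc_P b b' : Ble b b' -> pmap V b b' = invmx (Q b) *m Mrel b b' *m Q b'.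
Proof.
move=> hb; have [U _] := hV.
by rewrite -bc_M // !mulmxA mulVmx // mul1mx -mulmxA mulVmx // mulmx1.
Qed.

Lemma bc_unique b i j : idx b i = j -> forall i', idx b i' = j -> i' = i.
Proof. by have [_ [Inj _]] := hV; move=> <- i' /Inj. Qed.

Lemma bc_mem b i : I (idx b i) b.
Proof. by have [_ [_ [H _]]] := hV; apply/H; exists i. Qed.

Lemma bc_ex b j : I j b -> exists i, idx b i = j.
Proof. by have [_ [_ [H _]]] := hV; move/H. Qed.

End BC.

Section Cross.
Variables (k : fieldType) (A B : pmod k) (JA JB : Type)
  (IA : JA -> Bpt -> Prop) (IB : JB -> Bpt -> Prop)
  (idxA : forall b, 'I_(pdim A b) -> JA) (QA : forall b, 'M[k]_(pdim A b))
  (idxB : forall b, 'I_(pdim B b) -> JB) (QB : forall b, 'M[k]_(pdim B b)) (e : R).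
Arguments idxA : clear implicits.
Arguments idxB : clear implicits.
Arguments QA : clear implicits.
Arguments QB : clear implicits.
Arguments f : clear implicits.
Hypotheses (hA : bcP A IA idxA QA) (hB : bcP B IB idxB QB).
Variable f : forall b, 'M[k]_(pdim A b, pdim B (Lam e b)).
Hypothesis hf : is_hom (W := shift B e) f.

Definition Fm b := QA b *m f b *m invmx (QB (Lam e b)).

Lemma Fm_hom b b' : Ble b b' ->
  Mrel idxA b b' *m Fm b' = Fm b *m Mrel idxB (Lam e b) (Lam e b').
Proof.
move=> hb; have hb' := Lam_mono e hb.
rewrite -(bc_M hA hb) -(bc_M hB hb') /Fm.
have [UA _] := hA; have [UB _] := hB.
rewrite !mulmxA -[_ *m invmx (QA b') *m QA b']mulmxA mulVmx // mulmx1.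
rewrite -[_ *m invmx (QB (Lam e b)) *m QB (Lam e b)]mulmxA mulVmx // mulmx1.
by rewrite -!mulmxA; congr (_ *m _); rewrite !mulmxA; congr (_ *m _); apply: hf.
Qed.

Lemma Fm_up b i m : Fm b i m != 0 -> forall b', Ble b b' ->
  IB (idxB (Lam e b) m) (Lam e b') -> IA (idxA b i) b'.
Proof.
move=> nz b' hb h; apply: NNPP => h'.
have [m' hm'] := bc_ex hB h.
move/matrixP: (Fm_hom hb) => /(_ i m').
rewrite relmx_mulF0; last first.
  move=> i' e'; apply: h'; rewrite e'. exact: (bc_mem hA).
rewrite (@Fmul_relmx _ _ _ _ _ _ _ _ m) //.
  by move=> E; move: nz; rewrite -E eqxx.
by move=> j ej; apply: (bc_unique hB (erefl _)); rewrite ej hm'.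
Qed.

Lemma Fm_down b i m : Fm b i m != 0 -> forall b'', Ble b'' b ->
  IA (idxA b i) b'' -> IB (idxB (Lam e b) m) (Lam e b'').
Proof.
move=> nz b'' hb h; apply: NNPP => h'.
have [i0 hi0] := bc_ex hA h.
move/matrixP: (Fm_hom hb) => /(_ i0 m).
rewrite (@relmx_mulF _ _ _ _ _ _ _ _ i) //; last first.
  by move=> j ej; apply: (bc_unique hA (erefl _)); rewrite -ej hi0.
rewrite Fmul_relmx0; last first.
  by move=> j ej; apply: h'; rewrite -ej; exact: (bc_mem hB).
by move=> E; move: nz; rewrite E eqxx.
Qed.

End Cross.

Lemma cross_zero (k : fieldType) (A B : pmod k) (JA JB : Type)
  (IA : JA -> Bpt -> Prop) (IB : JB -> Bpt -> Prop) X Y e :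
  has_barcode A IA -> has_barcode B IB ->
  (forall j, of_type X (IA j)) -> (forall j, of_type Y (IB j)) -> X <> Y ->
  forall (f : forall b, 'M[k]_(pdim A b, pdim B (Lam e b)))
         (g : forall b, 'M[k]_(pdim B b, pdim A (Lam e b))),
  is_hom (W := shift B e) f -> is_hom (W := shift A e) g ->
  forall b, f b *m g (Lam e b) = 0.
Proof.
move=> [intA [idxA [QA bA]]] [intB [idxB [QB bB]]] TA TB nXY f g hf hg b.
have key : Fm QA QB f b *m Fm QB QA g (Lam e b) = 0.
  apply/matrixP => i i2; rewrite mxE [RHS]mxE; apply: sum_zero => m.
  case: (eqVneq (Fm QA QB f b i m) 0) => [->|nz1]; first by rewrite mul0r.
  case: (eqVneq (Fm QB QA g (Lam e b) m i2) 0) => [->|nz2]; first by rewrite mulr0.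
  exfalso; apply: nXY.
  apply: (@cross_logic X Y (IA (idxA b i)) (IB (idxB (Lam e b) m))
            (IA (idxA (Lam e (Lam e b)) i2)) b e).
  - exact: intA.
  - exact: intB.
  - exact: intA.
  - exact: TA.
  - exact: TB.
  - exact: TA.
  - exact: (bc_mem bA).
  - exact: (bc_mem bB).
  - exact: (Fm_down bB bA hg nz2 (Ble_Ninf _)).
  - exact: (Fm_up bA bB hf nz1 (Ble_Pinf _)).
  - exact: (Fm_down bA bB hf nz1 (Ble_Ninf _)).
  - exact: (Fm_up bB bA hg nz2 (Ble_Pinf _)).
have [UA _] := bA; have [UB _] := bB.
have E : QA b *m (f b *m g (Lam e b)) *m invmx (QA (Lam e (Lam e b))) = 0.
  rewrite -key /Fm !mulmxA; congr (_ *m _).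
  by rewrite -[_ *m invmx (QB _) *m QB _]mulmxA mulVmx // mulmx1.
have := congr1 (fun M => invmx (QA b) *m M *m QA (Lam e (Lam e b))) E.
by rewrite mulmx0 mul0mx !mulmxA mulVmx // mul1mx -mulmxA mulVmx // mulmx1.
Qed.

Lemma sig_inj (J : Type) (P : J -> Prop) (a a' : {j : J | P j}) :
  proj1_sig a = proj1_sig a' -> a = a'.
Proof.
case: a => x px; case: a' => y py /= exy; subst y.
by rewrite (proof_irrelevance _ px py).
Qed.

Section Parts.
Variables (k : fieldType) (V : pmod k) (VX : itype -> pmod k) (J : Type)
  (I : J -> Bpt -> Prop)
  (idx : forall b, 'I_(pdim V b) -> J) (Q : forall b, 'M[k]_(pdim V b))
  (idx' : forall X b, 'I_(pdim (VX X) b) -> {j : J | of_type X (I j)})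
  (Q' : forall X b, 'M[k]_(pdim (VX X) b)).
Arguments idx : clear implicits.
Arguments Q : clear implicits.
Arguments idx' : clear implicits.
Arguments Q' : clear implicits.
Hypotheses (intI : forall j, is_interval (I j)) (hV : bcP V I idx Q)
  (hX : forall X, bcP (VX X) (fun j : {j : J | of_type X (I j)} => I (proj1_sig j))
                     (idx' X) (Q' X)).

Definition Em X b : 'M[k]_(pdim (VX X) b, pdim V b) :=
  @relmx k _ _ (fun i' i => proj1_sig (idx' X b i') = idx b i).
Definition iota X b := invmx (Q' X b) *m Em X b *m Q b.
Definition pi X b := invmx (Q b) *m (Em X b)^T *m Q' X b.

Let InjV b : injective (idx b). Proof. by have [_ [H _]] := hV. Qed.
Let InjX X b : injective (idx' X b). Proof. by have [_ [H _]] := hX X. Qed.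
Let UV b : Q b \in unitmx. Proof. by have [H _] := hV. Qed.
Let UX X b : Q' X b \in unitmx. Proof. by have [H _] := hX X. Qed.
Let memX X b i' : I (proj1_sig (idx' X b i')) b.
Proof. exact: (bc_mem (hX X)). Qed.
Let memV b i : I (idx b i) b.
Proof. exact: (bc_mem hV). Qed.
Let exV b j : I j b -> exists i, idx b i = j.
Proof. exact: (bc_ex hV). Qed.
Let exX X b (j : {j : J | of_type X (I j)}) : I (proj1_sig j) b ->
  exists i', idx' X b i' = j.
Proof. exact: (bc_ex (hX X) (j := j)). Qed.
Let typ X b i' : of_type X (I (proj1_sig (idx' X b i'))).
Proof. exact: (proj2_sig (idx' X b i')). Qed.

Lemma EEt_same X b : Em X b *m (Em X b)^T = 1%:M.
Proof.
rewrite /Em relmx_tr relmx_mul; last first.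
  by move=> i' m j j' e1 e2 e3 _; apply: (@InjV b); rewrite -e1 -e3.
rewrite -relmx_eq1; apply: relmx_ext => i' m; split.
  move=> [i [e1 e2]]; apply: (@InjX X b); apply: sig_inj.
  by rewrite e1 e2.
move=> <-; have [i hi] := exV (memX i'); by exists i.
Qed.

Lemma EEt_diff X Y b : X <> Y -> Em X b *m (Em Y b)^T = 0.
Proof.
move=> nXY; rewrite /Em relmx_tr relmx_mul; last first.
  by move=> i' m j j' e1 e2 e3 _; apply: (@InjV b); rewrite -e1 -e3.
rewrite -(relmx_F k); apply: relmx_ext => i' m; split => //.
move=> [i [e1 e2]]; apply: nXY.
apply: (@type_unique (I (idx b i))); first exact: intI.
  by rewrite -e1; exact: typ.
by rewrite -e2; exact: typ.
Qed.

Lemma EtE X b : (Em X b)^T *m Em X b =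
  @relmx k _ _ (fun i i2 => exists i', proj1_sig (idx' X b i') = idx b i /\
                                      proj1_sig (idx' X b i') = idx b i2).
Proof.
rewrite /Em relmx_tr relmx_mul //.
move=> i i2 j j' e1 e2 e3 _; apply: (@InjX X b); apply: sig_inj.
by rewrite e1 e3.
Qed.

Lemma EtE_sum b : \sum_X (Em X b)^T *m Em X b = 1%:M.
Proof.
rewrite (eq_bigr _ (fun X _ => EtE X b)) relmx_sum; last first.
  move=> i i2 X Y [i' [e1 _]] [m [e2 _]].
  apply: (@type_unique (I (idx b i))); first exact: intI.
    by rewrite -e1; exact: typ.
  by rewrite -e2; exact: typ.
rewrite -relmx_eq1; apply: relmx_ext => i i2; split.
  by move=> [X [i' [e1 e2]]]; apply: (@InjV b); rewrite -e1 -e2.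
move=> <-; have [X TX] := type_exists (intI (idx b i)).
have [i' hi'] := exX (j := exist _ (idx b i) TX) (memV i).
by exists X, i'; rewrite hi'.
Qed.

Lemma iota_pi_same X b : iota X b *m pi X b = 1%:M.
Proof.
rewrite /iota /pi !mulmxA -[_ *m Q b *m invmx (Q b)]mulmxA mulmxV // mulmx1.
by rewrite -[_ *m Em X b *m _]mulmxA EEt_same mulmx1 mulVmx.
Qed.

Lemma iota_pi_diff X Y b : X <> Y -> iota X b *m pi Y b = 0.
Proof.
move=> nXY.
rewrite /iota /pi !mulmxA -[_ *m Q b *m invmx (Q b)]mulmxA mulmxV // mulmx1.
by rewrite -[_ *m Em X b *m _]mulmxA EEt_diff // mulmx0 mul0mx.
Qed.

Lemma sum_pi_iota b : \sum_X pi X b *m iota X b = 1%:M.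
Proof.
have E : forall X, pi X b *m iota X b = invmx (Q b) *m ((Em X b)^T *m Em X b) *m Q b.
  move=> X; rewrite /iota /pi !mulmxA.
  by rewrite -[_ *m Q' X b *m invmx (Q' X b)]mulmxA mulmxV // mulmx1.
rewrite (eq_bigr _ (fun X _ => E X)) -mulmx_suml -mulmx_sumr EtE_sum mulmx1.
exact: mulVmx.
Qed.

Lemma key_iota X b b' : Ble b b' ->
  Mrel (idx' X) b b' *m Em X b' = Em X b *m Mrel idx b b'.
Proof.
move=> hb; rewrite /Mrel /Em relmx_mul; last first.
  by move=> i' i2 m m' e1 _ e3 _; apply: (@InjX X b'); rewrite -e1 -e3.
rewrite relmx_mul; last first.
  by move=> i' i2 j j' e1 _ e3 _; apply: (@InjV b); rewrite -e1 -e3.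
apply: relmx_ext => i' i2; split.
  move=> [m [e1 e2]]; have [i hi] := exV (memX i').
  by exists i; split => //; rewrite hi e1 e2.
move=> [i [e1 e2]].
have hm : I (proj1_sig (idx' X b i')) b' by rewrite e1 e2; exact: memV.
have [m hm'] := exX hm.
by exists m; split; [rewrite hm' | rewrite hm' e1 e2].
Qed.

Lemma key_pi X b b' : Ble b b' ->
  Mrel idx b b' *m (Em X b')^T = (Em X b)^T *m Mrel (idx' X) b b'.
Proof.
move=> hb; rewrite /Mrel /Em !relmx_tr relmx_mul; last first.
  by move=> i m j j' e1 _ e3 _; apply: (@InjV b'); rewrite -e1 -e3.
rewrite relmx_mul; last first.
  by move=> i m j j' _ e2 _ e4; apply: (@InjX X b); rewrite e2 e4.
apply: relmx_ext => i m; split.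
  move=> [i2 [e1 e2]].
  have hm : I (proj1_sig (idx' X b' m)) b by rewrite e2 -e1; exact: memV.
  have [i' hi'] := exX hm.
  by exists i'; split; [rewrite hi' e2 e1 | rewrite hi'].
move=> [i' [e1 e2]]; have [i2 hi2] := exV (memX m).
by exists i2; split; [rewrite hi2 -e2 e1 | rewrite hi2].
Qed.

Lemma iota_hom X : is_hom (iota X).
Proof.
move=> b b' hb; rewrite /iota (bc_P (hX X) hb) (bc_P hV hb) !mulmxA.
rewrite -[_ *m Q' X b' *m invmx (Q' X b')]mulmxA mulmxV // mulmx1.
rewrite -[_ *m Q b *m invmx (Q b)]mulmxA mulmxV // mulmx1.
congr (_ *m _); rewrite -!mulmxA; congr (_ *m _); exact: key_iota.
Qed.

Lemma pi_hom X : is_hom (pi X).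
Proof.
move=> b b' hb; rewrite /pi (bc_P (hX X) hb) (bc_P hV hb) !mulmxA.
rewrite -[_ *m Q b' *m invmx (Q b')]mulmxA mulmxV // mulmx1.
rewrite -[_ *m Q' X b *m invmx (Q' X b)]mulmxA mulmxV // mulmx1.
congr (_ *m _); rewrite -!mulmxA; congr (_ *m _); exact: key_pi.
Qed.

End Parts.

Lemma hom_comp3 (k : fieldType) (A B C D : pmod k) e
  (u : forall b, 'M[k]_(pdim A b, pdim B b))
  (v : forall b, 'M[k]_(pdim B b, pdim C (Lam e b)))
  (w : forall b, 'M[k]_(pdim C b, pdim D b)) :
  is_hom u -> is_hom (W := shift C e) v -> is_hom w ->
  is_hom (W := shift D e) (fun b => u b *m v b *m w (Lam e b)).
Proof.
move=> hu hv hw b b' hb /=.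
rewrite !mulmxA hu // -!mulmxA; congr (_ *m _).
rewrite !mulmxA hv // -!mulmxA; congr (_ *m _).
by apply: hw; apply: Lam_mono.
Qed.

Lemma hom_sum (k : fieldType) (A B : pmod k) (T : finType)
  (u : T -> forall b, 'M[k]_(pdim A b, pdim B b)) :
  (forall t, is_hom (u t)) -> is_hom (fun b => \sum_t u t b).
Proof.
move=> H b b' hb /=; rewrite mulmx_sumr mulmx_suml; apply: eq_bigr => t _.
exact: H.
Qed.

Lemma parts_ex (k : fieldType) (V : pmod k) (VX : itype -> pmod k) :
  type_parts V VX ->
  exists (iota : forall X b, 'M[k]_(pdim (VX X) b, pdim V b))
         (pi : forall X b, 'M[k]_(pdim V b, pdim (VX X) b)),
  (forall X, is_hom (iota X)) /\ (forall X, is_hom (pi X)) /\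
  (forall X b, iota X b *m pi X b = 1%:M) /\
  (forall X Y b, X <> Y -> iota X b *m pi Y b = 0) /\
  (forall b, \sum_X pi X b *m iota X b = 1%:M) /\
  (forall X, exists (J' : Type) (I' : J' -> Bpt -> Prop),
      has_barcode (VX X) I' /\ forall j, of_type X (I' j)).
Proof.
move=> [J [I [[intI [idx [Q hV]]] HX]]].
pose s X := constructive_indefinite_description _ (proj2 (HX X)).
pose idx' X := proj1_sig (s X).
pose s2 X := constructive_indefinite_description _ (proj2_sig (s X)).
pose Q' X := proj1_sig (s2 X).
have hX : forall X, bcP (VX X) (fun j : {j : J | of_type X (I j)} => I (proj1_sig j))
                     (idx' X) (Q' X).
  move=> X; exact: (proj2_sig (s2 X)).
exists (iota idx Q idx' Q'), (pi idx Q idx' Q').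
split; first by move=> X; exact: (iota_hom hV hX).
split; first by move=> X; exact: (pi_hom hV hX).
split; first by move=> X b; exact: (iota_pi_same hV hX).
split; first by move=> X Y b nXY; exact: (iota_pi_diff idx' Q' intI hV b nXY).
split; first by move=> b; exact: (sum_pi_iota intI hV hX).
move=> X; exists {j : J | of_type X (I j)}, (fun j => I (proj1_sig j)); split.
  exact: HX.
by move=> j; exact: (proj2_sig j).
Qed.

From Stdlib Require Import Lra.

Lemma Ble_2e e b : Rle 0 e -> Ble b (Lam e (Lam e b)).
Proof. move=> he; case: b => [||r s] //=; split => //; lra. Qed.

Theorem proposition4p6 (k : fieldType) (V W : pmod k)
    (VX WX : itype -> pmod k) (e : R) :
  type_parts V VX -> type_parts W WX -> Rle 0 e ->
  (interleaved V W e <-> forall X : itype, interleaved (VX X) (WX X) e).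
Proof.
move=> /parts_ex [iV [pV [hiV [hpV [ipV [ipdV [spV tV]]]]]]].
move=> /parts_ex [iW [pW [hiW [hpW [ipW [ipdW [spW tW]]]]]]] he.
split.
- move=> [a [bt [ha [hb [hab hba]]]]] X.
  exists (fun b => iV X b *m a b *m pW X (Lam e b)),
         (fun b => iW X b *m bt b *m pV X (Lam e b)).
  split; first exact: hom_comp3.
  split; first exact: hom_comp3.
  split.
  + move=> b; set c := Lam e b.
    have S : pW X c *m iW X c = 1%:M - \sum_(Y | Y != X) pW Y c *m iW Y c.
      by rewrite -(spW c) (bigD1 X) //= addrK.
    transitivity (iV X b *m a b *m (pW X c *m iW X c) *m (bt c *m pV X (Lam e c))).
      by rewrite !mulmxA.
    rewrite S mulmxBr mulmx1 mulmxBl mulmx_sumr mulmx_suml big1; last first.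
      move=> Y nYX.
      have [J1 [I1 [b1 t1]]] := tV X; have [J2 [I2 [b2 t2]]] := tW Y.
      transitivity ((iV X b *m a b *m pW Y c) *m (iW Y c *m bt c *m pV X (Lam e c))).
        by rewrite !mulmxA.
      have nXY : X <> Y by move=> E; move: nYX; rewrite E eqxx.
      exact: (cross_zero b1 b2 t1 t2 nXY
                (f := fun b => iV X b *m a b *m pW Y (Lam e b))
                (g := fun b => iW Y b *m bt b *m pV X (Lam e b))
                (hom_comp3 (hiV X) ha (hpW Y)) (hom_comp3 (hiW Y) hb (hpV X)) b).
    rewrite subr0 mulmxA -[iV X b *m a b *m bt c]mulmxA hab.
    by rewrite -(hiV X _ _ (Ble_2e b he)) -mulmxA ipV mulmx1.
  + move=> b; set c := Lam e b.
    have S : pV X c *m iV X c = 1%:M - \sum_(Y | Y != X) pV Y c *m iV Y c.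
      by rewrite -(spV c) (bigD1 X) //= addrK.
    transitivity (iW X b *m bt b *m (pV X c *m iV X c) *m (a c *m pW X (Lam e c))).
      by rewrite !mulmxA.
    rewrite S mulmxBr mulmx1 mulmxBl mulmx_sumr mulmx_suml big1; last first.
      move=> Y nYX.
      have [J1 [I1 [b1 t1]]] := tW X; have [J2 [I2 [b2 t2]]] := tV Y.
      transitivity ((iW X b *m bt b *m pV Y c) *m (iV Y c *m a c *m pW X (Lam e c))).
        by rewrite !mulmxA.
      have nXY : X <> Y by move=> E; move: nYX; rewrite E eqxx.
      exact: (cross_zero b1 b2 t1 t2 nXY
                (f := fun b => iW X b *m bt b *m pV Y (Lam e b))
                (g := fun b => iV Y b *m a b *m pW X (Lam e b))
                (hom_comp3 (hiW X) hb (hpV Y)) (hom_comp3 (hiV Y) ha (hpW X)) b).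
    rewrite subr0 mulmxA -[iW X b *m bt b *m a c]mulmxA hba.
    by rewrite -(hiW X _ _ (Ble_2e b he)) -mulmxA ipW mulmx1.
- move=> H.
  pose s X := constructive_indefinite_description _ (H X).
  pose aX X := proj1_sig (s X).
  pose s2 X := constructive_indefinite_description _ (proj2_sig (s X)).
  pose bX X := proj1_sig (s2 X).
  have P X := proj2_sig (s2 X).
  exists (fun b => \sum_X pV X b *m aX X b *m iW X (Lam e b)),
         (fun b => \sum_X pW X b *m bX X b *m iV X (Lam e b)).
  split.
    apply: hom_sum => X; apply: hom_comp3 => //; by have [? _] := P X.
  split.
    apply: hom_sum => X; apply: hom_comp3 => //; by have [_ [? _]] := P X.
  split.
  + move=> b; set c := Lam e b.
    rewrite mulmx_suml -[RHS]mul1mx -(spV b) mulmx_suml; apply: eq_bigr => X _.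
    rewrite mulmx_sumr (bigD1 X) //= big1 ?addr0; last first.
      move=> Y nYX; have nXY : X <> Y by move=> E; move: nYX; rewrite E eqxx.
      by rewrite -!mulmxA [iW X c *m _]mulmxA ipdW // mul0mx !mulmx0.
    have [_ [_ [hab _]]] := P X.
    rewrite -!mulmxA [iW X c *m _]mulmxA ipW mul1mx.
    by rewrite [aX X b *m _]mulmxA hab (hiV X _ _ (Ble_2e b he)) !mulmxA.
  + move=> b; set c := Lam e b.
    rewrite mulmx_suml -[RHS]mul1mx -(spW b) mulmx_suml; apply: eq_bigr => X _.
    rewrite mulmx_sumr (bigD1 X) //= big1 ?addr0; last first.
      move=> Y nYX; have nXY : X <> Y by move=> E; move: nYX; rewrite E eqxx.
      by rewrite -!mulmxA [iV X c *m _]mulmxA ipdV // mul0mx !mulmx0.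
    have [_ [_ [_ hba]]] := P X.
    rewrite -!mulmxA [iV X c *m _]mulmxA ipV mul1mx.
    by rewrite [bX X b *m _]mulmxA hba (hiW X _ _ (Ble_2e b he)) !mulmxA.
Qed.
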